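(* Let $(G,v)$ and $(G',v')$ be valued abelian groups and $f:G\to G'$ a map with $f0=0$. If $f$ is immediate, then for every $a'\in G'\setminus\{0\}$ there is $a\in G$ such that (IH1) $v'(a'-fa)>v'a'$, and (IH2) for all $b\in G$, $va\le vb$ implies $v'fa\le v'fb$. Conversely, if $f$ is a group homomorphism and for every $a'\in G'\setminus\{0\}$ there is $a\in G$ satisfying (IH1) and (IH2), then $f$ is immediate.
   Context: A valued abelian group $(G,v)$ is an abelian group with a map $v$ from $G$ onto $vG\cup\{\infty\}$, $vG$ totally ordered and $\infty$ larger than all its elements, such that $va=\infty$ iff $a=0$ and $v(a-b)\ge\min\{va,vb\}$. It is regarded as an ultrametric space with $u(a,b)=v(a-b)$. For a map $f:Y\to Y'$ of ultrametric spaces, with closed balls $B(x,y)=\{z:u(x,z)\ge u(x,y)\}$, an element $z'\in Y'$ is an attractor for $f$ if for every $y\in Y$ with $z'\neq fy$ there is $z\in Y$ with $u'(fz,z')>u'(fy,z')$ and $f(B(y,z))\subseteq B(fy,z')$; $f$ is immediate if every $z'\in Y'$ is an attractor for $f$. *)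

(* Defs.v *)
From HB Require Import structures.
From mathcomp Require Import all_boot all_order all_algebra.
Set Implicit Arguments. Unset Strict Implicit. Unset Printing Implicit Defensive.
Import Order.TTheory GRing.Theory.
Local Open Scope order_scope.

(* A valuation on an abelian group G with values in a totally ordered set
   with a top element \top playing the role of infinity:
   v a = \top  iff  a = 0,  and  v (a - b) >= min (v a) (v b). *)
Definition valuation (G : zmodType) (d : Order.disp_t) (Gam : tOrderType d)
  (v : G -> Gam) : Prop :=
  (forall a : G, v a = \top <-> a = 0%R) /\
  (forall a b : G, Order.min (v a) (v b) <= v (a - b)%R).

Definition vball (G : zmodType) (d : Order.disp_t) (Gam : tOrderType d)
  (v : G -> Gam) (x y : G) : G -> Prop :=
  fun z => v (x - y)%R <= v (x - z)%R.

Definition attractor (G G' : zmodType) (d d' : Order.disp_t)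
  (Gam : tOrderType d) (Gam' : tOrderType d')
  (v : G -> Gam) (v' : G' -> Gam') (f : G -> G') (z' : G') : Prop :=
  forall y : G, z' <> f y ->
    exists z : G, v' (f y - z')%R < v' (f z - z')%R /\
      (forall w : G, vball v y z w -> vball v' (f y) z' (f w)).

Definition immediate (G G' : zmodType) (d d' : Order.disp_t)
  (Gam : tOrderType d) (Gam' : tOrderType d')
  (v : G -> Gam) (v' : G' -> Gam') (f : G -> G') : Prop :=
  forall z' : G', attractor v v' f z'.

Definition IH_property (G G' : zmodType) (d d' : Order.disp_t)
  (Gam : tOrderType d) (Gam' : tOrderType d')
  (v : G -> Gam) (v' : G' -> Gam') (f : G -> G') : Prop :=
  forall a' : G', a' <> 0%R ->
    exists a : G, v' a' < v' (a' - f a)%R /\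
      (forall b : G, v a <= v b -> v' (f a) <= v' (f b)).

(* Main.v *)
Require Import Defs.
From mathcomp Require Import all_boot all_order all_algebra.
Import Order.TTheory GRing.Theory.
Local Open Scope order_scope.
Set Implicit Arguments.

Section V.
Variables (G : zmodType) (d : Order.disp_t) (Gam : tOrderType d) (v : G -> Gam).
Hypothesis hv : valuation v.

Lemma vN_le (x : G) : v x <= v (- x)%R.
Proof.
case: hv => h0 hm. have := hm 0%R x.
have -> : v 0%R = \top by apply/h0.
rewrite sub0r ge_min => /orP [] // H; exact: le_trans (lex1 _) H.
Qed.

Lemma vN (x : G) : v (- x)%R = v x.
Proof. by apply/le_anti; rewrite vN_le -{2}(opprK x) vN_le. Qed.

Lemma vsubC (x y : G) : v (x - y)%R = v (y - x)%R.
Proof. by rewrite -vN opprB. Qed.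

Lemma vstrict (x y : G) : v x < v (x - y)%R -> v x <= v y.
Proof.
move=> lt. case: hv => _ hm. have := hm x (x - y)%R.
have -> : (x - (x - y) = y)%R by rewrite opprB addrCA subrr addr0.
rewrite ge_min => /orP [] // H.
exact: ltW (lt_le_trans lt H).
Qed.

Lemma vstrict2 (x y : G) : v y < v (x - y)%R -> v x <= v y.
Proof.
move=> lt. case: hv => _ hm. have := hm x (x - y)%R.
have -> : (x - (x - y) = y)%R by rewrite opprB addrCA subrr addr0.
rewrite ge_min => /orP [] // H.
by have := lt_le_trans lt H; rewrite ltxx.
Qed.
End V.

Theorem proposition11 (G G' : zmodType) (d d' : Order.disp_t)
  (Gam : tOrderType d) (Gam' : tOrderType d')
  (v : G -> Gam) (v' : G' -> Gam') (f : G -> G') :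
  valuation v -> valuation v' -> f 0%R = 0%R ->
  (immediate v v' f -> IH_property v v' f) /\
  ((forall a b : G, f (a + b)%R = (f a + f b)%R) ->
     IH_property v v' f -> immediate v v' f).
Proof.
move=> hv hv' f0; split.
- move=> imm a' a'0.
  have [|z [H1 H2]] := imm a' 0%R; first by rewrite f0 => E; apply: a'0.
  rewrite f0 sub0r (vN hv') in H1.
  exists z; split; first by rewrite vsubC.
  move=> b Hb.
  have Hz : v' (f z) <= v' a'.
    by apply: (vstrict2 hv').
  have := H2 b; rewrite /vball f0 !sub0r !(vN hv) !(vN hv') => /(_ Hb) H.
  exact: le_trans Hz H.
- move=> fadd IH z' y Hne.
  have a'0 : (z' - f y)%R != 0%R by rewrite subr_eq0; apply/eqP => E; apply: Hne.
  have [a [H1 H2]] := IH _ (elimN eqP a'0).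
  exists (y + a)%R; split.
    by rewrite fadd -(vN hv') opprB (vsubC hv' (f y + f a)%R) opprD addrA.
  move=> w; rewrite /vball => Hw.
  have Hb : v a <= v (w - y)%R.
    by move: Hw; rewrite opprD addrA subrr sub0r (vN hv) (vsubC hv).
  have Ha : v' (z' - f y)%R <= v' (f a) by apply: (vstrict hv').
  have E : f w = (f y + f (w - y))%R by rewrite -fadd addrC subrK.
  rewrite E opprD addrA subrr sub0r (vN hv') -(vN hv') opprB.
  exact: le_trans Ha (H2 _ Hb).
Qed.
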